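(* For every integer $t$, there exists a connected bipartite graph whose adjacency matrix has exactly five distinct eigenvalues and which has at least $t$ distinct valencies (vertex degrees).
   Context: Eigenvalues of a graph are the eigenvalues of its adjacency matrix. Graphs are finite, simple and undirected. *)

(* Defs.v *)
From mathcomp Require Import all_boot all_order all_algebra.
From mathcomp Require Import algC.
Set Implicit Arguments. Unset Strict Implicit. Unset Printing Implicit Defensive.
Import GRing.Theory Num.Theory.
Local Open Scope ring_scope.

Definition simple_graph (n : nat) (e : rel 'I_n) : Prop :=
  symmetric e /\ irreflexive e.

Definition adjmx (n : nat) (e : rel 'I_n) : 'M[algC]_n :=
  \matrix_(i, j) (e i j)%:R.

Definition distinct_eigenvalues (n : nat) (e : rel 'I_n) (s : seq algC) : Prop :=
  uniq s /\ forall a : algC, eigenvalue (adjmx e) a <-> a \in s.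

Definition connected_graph (n : nat) (e : rel 'I_n) : Prop :=
  (0 < n)%N /\ forall x y : 'I_n, connect e x y.

Definition bipartite (n : nat) (e : rel 'I_n) : Prop :=
  exists c : 'I_n -> bool, forall x y, e x y -> c x != c y.

Definition degree (n : nat) (e : rel 'I_n) (x : 'I_n) : nat := #|[set y | e x y]|.

Definition num_valencies (n : nat) (e : rel 'I_n) : nat :=
  size (undup [seq degree e x | x <- enum 'I_n]).

(* Main.v *)
Set Warnings "-all".
Require Import Defs.
From mathcomp Require Import all_boot all_order all_algebra algC ring zify.
Import GRing.Theory Num.Theory Order.TTheory.
Local Open Scope ring_scope.

Section Eig.
Variables (n : nat) (e : rel 'I_n) (col : 'I_n -> bool) (R M p : nat).
Hypothesis esym : symmetric e.
Hypothesis ecol : forall x y, e x y -> col x != col y.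
Hypothesis edeg : forall x, col x -> #|[set y | e x y]| = R.
Hypothesis ecom : forall x y, col x -> col y -> x != y -> #|[set z | e x z && e z y]| = M.
Hypothesis hp : #|[set x | col x]| = p.

Local Notation A := (adjmx e).

Lemma AE i j : A i j = (e i j)%:R.
Proof. by rewrite mxE. Qed.

Lemma A2E i j : (A *m A) i j = #|[set z | e i z && e z j]|%:R.
Proof.
rewrite mxE -sum1dep_card natr_sum [in RHS]big_mkcond /=; apply: eq_bigr => z _.
by rewrite !mxE; case: (e i z); case: (e z j); rewrite ?mul1r ?mul0r.
Qed.

Lemma col_noadj x y : col x = col y -> e x y = false.
Proof. by move=> h; apply/negP => hxy; move: (ecol _ _ hxy); rewrite h eqxx. Qed.

Lemma A2_pt j i : col i ->
  (A *m A) j i = (col j)%:R * M%:R + (j == i)%:R * (R%:R - M%:R).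
Proof.
move=> ci; rewrite A2E.
have [->|nji] := eqVneq j i.
  rewrite ci !mul1r addrC subrK; congr _%:R; rewrite -(edeg _ ci).
  by apply: eq_card => z; rewrite !inE esym andbb.
rewrite mul0r addr0; case cj: (col j).
  by rewrite ecom // mul1r.
rewrite mul0r; apply/eqP; rewrite pnatr_eq0 cards_eq0; apply/eqP/setP => z.
rewrite !inE; apply/negP => /andP [hjz hzi].
move: (ecol _ _ hjz) (ecol _ _ hzi); rewrite cj ci.
by case: (col z).
Qed.

Lemma A2_bp j i : col j -> ~~ col i -> (A *m A) j i = 0.
Proof.
move=> cj ci; rewrite A2E; apply/eqP; rewrite pnatr_eq0 cards_eq0; apply/eqP/setP => z.
rewrite !inE; apply/negP => /andP [hjz hzi].
move: (ecol _ _ hjz) (ecol _ _ hzi); rewrite cj (negbTE ci).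
by case: (col z).
Qed.

Definition Spt (v : 'rV[algC]_n) := \sum_j (col j)%:R * v 0 j.

Lemma vA2_pt (v : 'rV[algC]_n) i : col i ->
  (v *m (A *m A)) 0 i = (R%:R - M%:R) * v 0 i + M%:R * Spt v.
Proof.
move=> ci; rewrite mxE.
under eq_bigr => j _ do rewrite A2_pt // mulrDr.
rewrite big_split /= addrC; congr (_ + _).
  rewrite (bigD1 i) //= eqxx big1 ?addr0; first by rewrite mul1r mulrC.
  by move=> j /negbTE ->; rewrite mul0r mulr0.
rewrite /Spt mulr_sumr; apply: eq_bigr => j _.
by ring.
Qed.

Definition onpts (u : 'rV[algC]_n) := forall j, ~~ col j -> u 0 j = 0.

Lemma vA2_bl (u : 'rV[algC]_n) i : onpts u -> ~~ col i -> (u *m (A *m A)) 0 i = 0.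
Proof.
move=> hu ci; rewrite mxE big1 // => j _.
case cj: (col j); first by rewrite A2_bp // mulr0.
by rewrite hu ?cj // mul0r.
Qed.

Lemma vA_pt (u : 'rV[algC]_n) i : onpts u -> col i -> (u *m A) 0 i = 0.
Proof.
move=> hu ci; rewrite mxE big1 // => j _.
case cj: (col j); first by rewrite AE col_noadj ?cj ?ci // mulr0.
by rewrite hu ?cj // mul0r.
Qed.

Lemma eig_from (u : 'rV[algC]_n) (lam a : algC) :
  onpts u -> u != 0 -> u *m (A *m A) = lam *: u -> a ^+ 2 = lam -> a != 0 ->
  eigenvalue A a.
Proof.
move=> hu un0 hA ha a0; apply/eigenvalueP.
exists (u + a^-1 *: (u *m A)).
  rewrite mulmxDl -scalemxAl -mulmxA hA scalerA -ha scalerDr scalerA.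
  rewrite divff // scale1r addrC; congr (_ + _); congr (_ *: _).
  by rewrite expr2 mulrA mulVf // mul1r.
apply: contra un0 => /eqP h; apply/eqP/rowP => j; rewrite mxE.
case cj: (col j); last by rewrite hu ?cj.
move/rowP: h => /(_ j); rewrite !mxE.
by move: (vA_pt u j hu cj); rewrite mxE => ->; rewrite mulr0 addr0.
Qed.


Lemma sum_col : \sum_j (col j)%:R = p%:R :> algC.
Proof.
rewrite -hp -sum1dep_card natr_sum [in RHS]big_mkcond /=.
by apply: eq_bigr => j _; case: (col j).
Qed.

Lemma Spt_pt (v : 'rV[algC]_n) a : (forall i, col i -> a * v 0 i = 0) ->
  forall j, ~~ col j -> v *m A = a *: v -> a != 0 -> v 0 j = 0.
Proof.
move=> h j cj hv a0.
have : (v *m A) 0 j = 0.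
  rewrite mxE big1 // => k _.
  case ck: (col k); last by rewrite AE col_noadj ?ck ?(negbTE cj) // mulr0.
  by move/eqP: (h k ck); rewrite mulf_eq0 (negbTE a0) /= => /eqP ->; rewrite mul0r.
by rewrite hv mxE => /eqP; rewrite mulf_eq0 (negbTE a0) => /eqP.
Qed.

Lemma sqr_in (a l : algC) : a ^+ 2 = l -> (a == sqrtC l) || (a == - sqrtC l).
Proof. by move=> h; rewrite -eqf_sqr sqrtCK h. Qed.

Theorem main_eig (x0 y0 u0 w0 : 'I_n) : col x0 -> col y0 -> x0 != y0 ->
  u0 != w0 -> (forall z, e u0 z = e w0 z) -> (M < R)%N -> (0 < M)%N ->
  distinct_eigenvalues e [:: 0; sqrtC (R%:R - M%:R); - sqrtC (R%:R - M%:R);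
     sqrtC (R%:R - M%:R + M%:R * p%:R); - sqrtC (R%:R - M%:R + M%:R * p%:R)].
Proof.
move=> cx cy xy uw ew MR M0.
set l1 : algC := R%:R - M%:R.
set l2 : algC := l1 + M%:R * p%:R.
have l1p : 0 < l1 by rewrite /l1 subr_gt0 ltr_nat.
have pp : (0 < p)%N.
  rewrite -hp card_gt0; apply/set0Pn; exists x0; by rewrite inE.
have l12 : l1 < l2 by rewrite /l2 ltrDl mulr_gt0 // ltr0n.
have r1p : 0 < sqrtC l1 by rewrite sqrtC_gt0.
have r12 : sqrtC l1 < sqrtC l2.
  by rewrite ltr_sqrtC // qualifE /= ?(ltW l1p) ?(ltW (lt_trans l1p l12)).
have r2p : 0 < sqrtC l2 := lt_trans r1p r12.
split.
  have n1 : - sqrtC l1 < 0 by rewrite oppr_lt0.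
  have n2 : - sqrtC l2 < 0 by rewrite oppr_lt0.
  have n21 : - sqrtC l2 < - sqrtC l1 by rewrite ltrN2.
  rewrite /= !inE !negb_or (lt_eqF r1p) (gt_eqF n1) (lt_eqF r2p) (gt_eqF n2).
  rewrite (gt_eqF (lt_trans n1 r1p)) (lt_eqF r12) (gt_eqF (lt_trans n2 r1p)).
  by rewrite (lt_eqF (lt_trans n1 r2p)) (gt_eqF n21) (gt_eqF (lt_trans n2 r2p)).
move=> a; split.
  move=> /eigenvalueP [v hv vn0].
  have [->|a0] := eqVneq a 0; first by rewrite inE eqxx.
  have hv2 : v *m (A *m A) = (a ^+ 2) *: v.
    by rewrite mulmxA hv -scalemxAl hv scalerA expr2.
  have hpt : forall i, col i -> a ^+ 2 * v 0 i = l1 * v 0 i + M%:R * Spt v.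
    by move=> i ci; rewrite -(vA2_pt v i ci) hv2 mxE.
  have [i0 /andP [ci0 vi0] | hnone] := pickP (fun i => col i && (v 0 i != 0)).
    have hS : a ^+ 2 * Spt v = l2 * Spt v.
      rewrite /Spt mulr_sumr.
      transitivity (\sum_j (col j)%:R * (l1 * v 0 j + M%:R * Spt v)).
        apply: eq_bigr => j _; case cj: (col j); last by rewrite !mul0r mulr0.
        by rewrite !mul1r hpt.
      under eq_bigr => j _ do rewrite mulrDr mulrCA.
      rewrite big_split /= -mulr_sumr -mulr_suml sum_col /l2 /Spt; ring.
    have [S0|Sn0] := eqVneq (Spt v) 0.
      have : a ^+ 2 * v 0 i0 = l1 * v 0 i0 by rewrite hpt // S0 mulr0 addr0.
      move/(mulIf vi0) => /sqr_in /orP [] /eqP ->; by rewrite !inE eqxx ?orbT.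
    move: hS => /(mulIf Sn0) /sqr_in /orP [] /eqP ->; by rewrite !inE eqxx ?orbT.
  case/negP: vn0; apply/eqP/rowP => j; rewrite mxE.
  have h0 : forall i, col i -> v 0 i = 0.
    by move=> i ci; move: (hnone i); rewrite ci /= => /negbFE /eqP.
  case cj: (col j); first by rewrite h0.
  apply: (Spt_pt v a _ j _ hv a0); last by rewrite cj.
  by move=> i ci; rewrite h0 // mulr0.
have hsq1 : forall r, r = sqrtC l1 \/ r = - sqrtC l1 -> r ^+ 2 = l1.
  by move=> r [] ->; rewrite ?sqrrN sqrtCK.
have hsq2 : forall r, r = sqrtC l2 \/ r = - sqrtC l2 -> r ^+ 2 = l2.
  by move=> r [] ->; rewrite ?sqrrN sqrtCK.
pose u1 : 'rV[algC]_n := delta_mx 0 x0 - delta_mx 0 y0.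
have u1pts : onpts u1.
  move=> j cj; rewrite !mxE.
  have -> : (j == x0) = false by apply/negP => /eqP h; move: cj; rewrite h cx.
  have -> : (j == y0) = false by apply/negP => /eqP h; move: cj; rewrite h cy.
  by rewrite andbF subrr.
have u1n0 : u1 != 0.
  apply/negP => /eqP/rowP/(_ x0); rewrite !mxE eqxx (negbTE xy) /= subr0 => /eqP.
  by rewrite eqxx oner_eq0.
have u1A : u1 *m (A *m A) = l1 *: u1.
  apply/rowP => i; rewrite [RHS]mxE.
  case ci: (col i); last by rewrite vA2_bl ?ci // u1pts ?ci // mulr0.
  rewrite vA2_pt //.
  suff -> : Spt u1 = 0 by rewrite mulr0 addr0.
  rewrite /Spt; under eq_bigr => j _ do rewrite !mxE /= mulrBr.
  rewrite sumrB (bigD1 x0) //= big1 => [|j /negbTE ->]; last by rewrite mulr0.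
  rewrite (bigD1 y0) //= big1 => [|j /negbTE ->]; last by rewrite mulr0.
  by rewrite cx cy !eqxx !mulr1 subrr.
pose u2 : 'rV[algC]_n := \row_j (col j)%:R.
have u2pts : onpts u2 by move=> j cj; rewrite mxE (negbTE cj).
have u2n0 : u2 != 0.
  by apply/negP => /eqP/rowP/(_ x0); rewrite !mxE cx => /eqP; rewrite oner_eq0.
have u2A : u2 *m (A *m A) = l2 *: u2.
  apply/rowP => i; rewrite [RHS]mxE.
  case ci: (col i); last by rewrite vA2_bl ?ci // u2pts ?ci // mulr0.
  rewrite vA2_pt // /Spt.
  under eq_bigr => j _ do rewrite mxE -natrM mulnb andbb.
  by rewrite sum_col mxE ci !mulr1.
rewrite !inE => /orP [/eqP ->|/orP [/eqP h|/orP [/eqP h|/orP [/eqP h|/eqP h]]]].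
- apply/eigenvalueP; exists (delta_mx 0 u0 - delta_mx 0 w0).
    rewrite scale0r mulmxBl -!rowE; apply/rowP => z; rewrite !mxE ew; apply: subrr.
  apply/negP => /eqP/rowP/(_ u0); rewrite !mxE !eqxx (negbTE uw) /= subr0.
  by move/eqP; rewrite oner_eq0.
- apply: (eig_from _ _ a u1pts u1n0 u1A (hsq1 a (or_introl h))).
  by rewrite h gt_eqF.
- apply: (eig_from _ _ a u1pts u1n0 u1A (hsq1 a (or_intror h))).
  by rewrite h oppr_eq0 gt_eqF.
- apply: (eig_from _ _ a u2pts u2n0 u2A (hsq2 a (or_introl h))).
  by rewrite h gt_eqF.
- apply: (eig_from _ _ a u2pts u2n0 u2A (hsq2 a (or_intror h))).
  by rewrite h oppr_eq0 gt_eqF.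
Qed.

End Eig.

Local Close Scope ring_scope.


Set Implicit Arguments. Unset Strict Implicit. Unset Printing Implicit Defensive.

Lemma card_sum (A B : finType) (P : pred (A + B)) :
  #|[set v | P v]| = (#|[set a | P (inl a)]| + #|[set b | P (inr b)]|)%N.
Proof. by rewrite -!sum1dep_card big_sumType. Qed.

Lemma card_pair1 (I J : finType) (i : I) (Q : pred J) :
  #|[set y : I * J | (y.1 == i) && Q y.2]| = #|[set c | Q c]|.
Proof.
have inj : injective (fun c : J => (i, c)) by move=> c1 c2 [].
rewrite -(card_imset _ inj); apply: eq_card => -[a c].
rewrite !inE; apply/idP/imsetP => [/andP [/eqP /= -> qc] | [c' ]].
  by exists c => //; rewrite inE.
by rewrite inE => qc [-> ->]; rewrite /= eqxx.
Qed.

Lemma card_lt (N x : nat) : (x <= N)%N -> #|[set c : 'I_N | (c < x)%N]| = x.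
Proof.
move=> xN; rewrite -sum1dep_card -(big_ord_widen _ (fun _ => 1%N) xN).
by rewrite sum1_card card_ord.
Qed.

Lemma card0_pred (T : finType) (P : pred T) : (forall x, P x = false) -> #|[set x | P x]| = 0%N.
Proof. by move=> h; apply/eqP; rewrite cards_eq0; apply/eqP/setP => x; rewrite !inE h. Qed.

Section Constr.
Variable t : nat.

Definition lam (i j : 'I_t) := #|[set k : 'I_t | (i <= k) && (j <= k)]|.
Definition pvalid (x : 'I_t * 'I_t * 'I_t) := (x.1.1 < x.1.2) && (x.2 < t - lam x.1.1 x.1.2).
Definition padj (x : 'I_t * 'I_t * 'I_t) (i : 'I_t) := (i == x.1.1) || (i == x.1.2).
Definition d1 (i : 'I_t) := (#|[set k : 'I_t | i <= k]| + #|[set x | pvalid x && padj x i]|)%N.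
Definition R0 := (t + t * t * t + 2)%N.
Definition lvalid (y : 'I_t * 'I_R0) := y.2 < R0 - d1 y.1.
Notation Blk := ('I_t + ('I_t * 'I_t * 'I_t + 'I_t * 'I_R0))%type.
Notation V0 := ('I_t + Blk)%type.
Definition bvalid (b : Blk) := match b with inl _ => true | inr (inl x) => pvalid x | inr (inr y) => lvalid y end.
Definition valid (v : V0) := match v with inl _ => true | inr b => bvalid b end.
Definition adjPB (i : 'I_t) (b : Blk) := match b with inl k => i <= k | inr (inl x) => padj x i | inr (inr y) => y.1 == i end.
Definition E : rel V0 := fun u v => match u, v with inl i, inr b => adjPB i b | inr b, inl i => adjPB i b | _, _ => false end.
Definition isPt (v : V0) := if v is inl _ then true else false.

Lemma d1_le i : (d1 i <= t + t * t * t)%N.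
Proof.
rewrite /d1; apply: leq_add; first by apply: leq_trans (max_card _) _; rewrite card_ord.
by apply: leq_trans (max_card _) _; rewrite !card_prod !card_ord.
Qed.

Lemma lam_le i j : (lam i j <= t)%N.
Proof. by apply: leq_trans (max_card _) _; rewrite card_ord. Qed.

Lemma deg_pt (i : 'I_t) : #|[set v | valid v && E (inl i) v]| = R0.
Proof.
rewrite card_sum card0_pred // add0n card_sum /=.
rewrite card_sum /= addnA.
have -> : (#|[set a : 'I_t | i <= a]| + #|[set a | pvalid a && padj a i]| = d1 i)%N by [].
have -> : #|[set b : 'I_t * 'I_R0 | lvalid b && (b.1 == i)]| = (R0 - d1 i)%N.
  transitivity #|[set y : 'I_t * 'I_R0 | (y.1 == i) && (y.2 < R0 - d1 i)]|.
    apply: eq_card => -[a c].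
    by rewrite !inE /lvalid /= andbC; case: eqP => // ->.
  by rewrite (@card_pair1 _ _ i (fun c : 'I_R0 => (c < R0 - d1 i)%N)) card_lt // leq_subr.
by rewrite subnKC // (leq_trans (d1_le i)) // /R0 leq_addr.
Qed.

Lemma lam_sym (i j : 'I_t) : lam i j = lam j i.
Proof. by apply: eq_card => k; rewrite !inE andbC. Qed.

Lemma pair_cnt (i j : 'I_t) : (i < j)%N ->
  #|[set x | pvalid x && (padj x i && padj x j)]| = (t - lam i j)%N.
Proof.
move=> ij.
transitivity #|[set x : ('I_t * 'I_t) * 'I_t | (x.1 == (i, j)) && (x.2 < t - lam i j)]|.
  apply: eq_card => -[[a b] c]; rewrite !inE /pvalid /padj /=.
  have [->|ai] := eqVneq a i; have [->|bj] := eqVneq b j.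
  - by rewrite ij orbT /= andbT xpair_eqE !eqxx.
  - rewrite xpair_eqE eqxx (negbTE bj) /=; apply/negP => /andP [_ /orP [/eqP hj|//]]; subst; lia.
  - rewrite xpair_eqE (negbTE ai) /=; apply/negP => /and3P [_ /eqP hi _]; subst; lia.
  - rewrite xpair_eqE (negbTE ai) /=; apply/negP => /and3P [/andP [ab _] /eqP hi /orP [/eqP hj|//]]; subst; lia.
by rewrite (@card_pair1 _ _ (i, j) (fun c : 'I_t => (c < t - lam i j)%N)) card_lt // leq_subr.
Qed.

Lemma com_pt (i j : 'I_t) : i != j ->
  #|[set v | valid v && (E (inl i) v && E v (inl j))]| = t.
Proof.
move=> ij.
rewrite card_sum card0_pred // add0n card_sum card_sum.
rewrite (card0_pred (P := fun b : 'I_t * 'I_R0 => _)); last first.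
  move=> [a c] /=; apply/negP => /andP [_ /andP [/eqP h1 /eqP h2]].
  by move: ij; rewrite -h1 -h2 eqxx.
rewrite addn0 /=.
have -> : #|[set a : 'I_t | (i <= a) && (j <= a)]| = lam i j by [].
have [lt|gt|eq] := ltngtP i j.
- by rewrite pair_cnt // subnKC // lam_le.
- transitivity (lam j i + #|[set x | pvalid x && (padj x j && padj x i)]|)%N.
    by rewrite lam_sym; congr (_ + _)%N; apply: eq_card => x; rewrite !inE [padj x i && _]andbC.
  by rewrite pair_cnt // subnKC // lam_le.
- by move: ij; rewrite (val_inj eq) eqxx.
Qed.

Lemma deg_blk (k : 'I_t) : #|[set v | valid v && E (inr (inl k)) v]| = k.+1.
Proof.
rewrite card_sum (card0_pred (P := fun b : Blk => valid (inr b) && E (inr (inl k)) (inr b))) ?addn0; last by move=> b; rewrite andbF.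
transitivity #|[set c : 'I_t | (c < k.+1)%N]|; first by apply: eq_card => c; rewrite !inE.
by rewrite card_lt.
Qed.

Lemma E_sym : symmetric E.
Proof. by move=> [u|u] [v|v]. Qed.

Lemma E_irr : irreflexive E.
Proof. by move=> [u|u]. Qed.

Lemma E_col u v : E u v -> isPt u != isPt v.
Proof. by case: u; case: v. Qed.

Lemma card_pts : #|[set v | valid v && isPt v]| = t.
Proof.
rewrite card_sum (card0_pred (P := fun b : Blk => valid (inr b) && isPt (inr b))) ?addn0; last by move=> b; rewrite andbF.
transitivity #|[set: 'I_t]|; first by apply: eq_card => c; rewrite !inE.
by rewrite cardsT card_ord.
Qed.

End Constr.

Notation V0' t := ('I_t + ('I_t + ('I_t * 'I_t * 'I_t + 'I_t * 'I_(R0 t))))%type.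

Lemma card_transfer (T : finType) (A : {set T}) (P : pred T) :
  #|[set y : 'I_#|A| | P (enum_val y)]| = #|[set v | (v \in A) && P v]|.
Proof.
rewrite -(card_imset _ (@enum_val_inj _ _)); apply: eq_card => v; rewrite !inE.
apply/imsetP/andP => [[y] | [vA pv]].
  by rewrite inE => py ->; rewrite enum_valP.
by exists (enum_rank_in vA v); rewrite ?inE enum_rankK_in.
Qed.

Section Final.
Variable m : nat.
Local Notation t := m.+2.
Definition A0 := [set v : V0' t | valid v].
Lemma mem0 : (inl ord0 : V0' t) \in A0. Proof. by rewrite inE. Qed.
Definition eG : rel 'I_#|A0| := fun x y => E (enum_val x) (enum_val y).
Definition rk := enum_rank_in mem0.
Lemma rkK v : valid v -> enum_val (rk v) = v.
Proof. by move=> hv; rewrite /rk enum_rankK_in // inE. Qed.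
Lemma valid_ev x : valid (enum_val (A := A0) x).
Proof. by move: (enum_valP x); rewrite inE. Qed.

Lemma degG x : #|[set y | eG x y]| = #|[set v | valid v && E (enum_val x) v]|.
Proof.
rewrite /eG (@card_transfer _ A0 (E (enum_val x))); apply: eq_card => v.
by rewrite !inE.
Qed.

Lemma neq_rk (u v : V0' t) : valid u -> valid v -> u != v -> rk u != rk v.
Proof.
move=> hu hv uv; apply/negP => /eqP h; move: (congr1 (@enum_val _ (mem A0)) h).
by rewrite !rkK // => /eqP; rewrite (negbTE uv).
Qed.

Lemma conn_pt x : connect eG x (rk (inl ord0)).
Proof.
have hmax : forall i : 'I_t, connect eG (rk (inl i)) (rk (inl ord0)).
  move=> i; apply: (@connect_trans _ _ (rk (inr (inl ord_max)))).
    by apply: connect1; rewrite /eG !rkK //= -ltnS.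
  by apply: connect1; rewrite /eG !rkK.
have ex : exists i, enum_val x = inl i \/ E (enum_val x) (inl i).
  move: (valid_ev x); case: (enum_val x) => [i|[k|[y|y]]] /= hv.
  - by exists i; left.
  - by exists ord0; right.
  - by exists y.1.1; right; rewrite /= /padj eqxx.
  - by exists y.1; right.
case: ex => i [hx|hx].
  by move: (hmax i); rewrite -hx /rk enum_valK_in.
apply: (@connect_trans _ _ (rk (inl i))) => //.
apply: connect1; rewrite /eG rkK //.
Qed.

Lemma final_m : exists (n : nat) (e : rel 'I_n),
    [/\ simple_graph e, connected_graph e, bipartite e,
        (exists s : seq algC, size s = 5%N /\ distinct_eigenvalues e s)
      & (t <= num_valencies e)%N].
Proof.
exists #|A0|, eG.
have esym : symmetric eG by move=> x y; rewrite /eG E_sym.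
pose col := fun x => isPt (enum_val (A := A0) x).
split.
- by split => // x; rewrite /eG E_irr.
- split; first by apply/card_gt0P; exists (inl ord0); exact: mem0.
  move=> x y; apply: (@connect_trans _ _ (rk (inl ord0))); first exact: conn_pt.
  by rewrite (sym_connect_sym esym); apply: conn_pt.
- by exists col => x y; rewrite /eG; apply: E_col.
- eexists; split; last first.
  have hc0 : (0 < R0 t)%N by rewrite /R0 addn2.
  have hc1 : (1 < R0 t)%N by rewrite /R0 addn2.
  pose c0 := Ordinal hc0; pose c1 := Ordinal hc1.
  pose i1 : 'I_t := Ordinal (isT : (1 < t)%N).
  have lv : forall c : 'I_(R0 t), (c < 2)%N -> valid (inr (inr (inr (ord0, c))) : V0' t).
    move=> c c2; rewrite /= /lvalid /=.
    have := d1_le (ord0 : 'I_t); rewrite /R0; move: (d1 _) (t + _ * _ * _) (nat_of_ord c) c2 => a b x; lia.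
  apply: (@main_eig _ eG col (R0 t) t t esym _ _ _ _ (rk (inl ord0)) (rk (inl i1))
     (rk (inr (inr (inr (ord0, c0))))) (rk (inr (inr (inr (ord0, c1)))))).
  + by move=> x y; apply: E_col.
  + move=> x; rewrite /col degG; move: (valid_ev x).
    by case: (enum_val x) => //= i _ _; rewrite deg_pt.
  + move=> x y; rewrite /col /eG; move: (valid_ev x) (valid_ev y).
    move hx : (enum_val x) => vx; move hy : (enum_val y) => vy.
    case: vx hx => // i hx; case: vy hy => // j hy _ _ _ _ xy.
    rewrite (@card_transfer _ A0 (fun v => E (inl i) v && E v (inl j))).
    have ij : i != j.
      by apply: contra xy => /eqP ij; apply/eqP/enum_val_inj; rewrite hx hy ij.
    transitivity #|[set v | valid v && (E (inl i) v && E v (inl j))]|.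
      by apply: eq_card => v; rewrite !inE.
    exact: com_pt.
  + rewrite /col (@card_transfer _ A0 (@isPt t)).
    transitivity #|[set v | valid v && @isPt t v]|; last exact: card_pts.
    by apply: eq_card => v; rewrite !inE.
  + by rewrite /col rkK.
  + by rewrite /col rkK.
  + by apply: neq_rk.
  + by apply: neq_rk => //; apply: lv.
  + move=> z; rewrite /eG !rkK ?lv //.
  + rewrite /R0; move: (t * t * t) => a; lia.
  + by [].
  by [].
rewrite /num_valencies.
pose s1 := [seq (val k).+1 | k <- enum 'I_t].
apply: (@leq_trans (size s1)); first by rewrite size_map size_enum_ord.
apply: uniq_leq_size.
  rewrite map_inj_uniq ?enum_uniq // => a b /eqP; rewrite eqSS => /eqP; apply: val_inj.
move=> d /mapP [k _ ->]; rewrite mem_undup; apply/mapP.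
exists (rk (inr (inl k))); first by rewrite mem_enum.
by rewrite /degree degG rkK // deg_blk.
Qed.

End Final.


Theorem theorem1 : forall t : nat,
  exists (n : nat) (e : rel 'I_n),
    [/\ simple_graph e, connected_graph e, bipartite e,
        (exists s : seq algC, size s = 5%N /\ distinct_eigenvalues e s)
      & (t <= num_valencies e)%N].
Proof.
move=> t; have [n [e [h1 h2 h3 h4 h5]]] := final_m t.
exists n, e; split => //; apply: leq_trans h5; apply: leqW; apply: leqnSn.
Qed.
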